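(* Let $m\geq 1$, $n\geq 3$, and let $k,r\in\{1,\ldots,m\}$ with $k\neq r$. There exists a walk of length $n-1$ in $D^m_n$ from a vertex $i\in V^k\setminus\{1\}$ to a vertex $j\in V^r\setminus\{1\}$ if and only if there exists $\ell\in\{3,\ldots,n\}$ such that $i=(k-1)(n-1)+\ell$ and $j=(r-1)(n-1)+(\ell-1)$. Moreover, in such cases this walk is unique.
   Context: For integers $m\geq 1$, $n\geq 3$, the oriented Dutch windmill graph $D^m_n$ is the directed graph with vertex set $V=\{1,2,\ldots,m(n-1)+1\}$ whose directed edges $(a,b)$ are exactly: $(1,(k-1)(n-1)+2)$ for $k\in\{1,\ldots,m\}$; $((k-1)(n-1)+i,(k-1)(n-1)+i+1)$ for $k\in\{1,\ldots,m\}$ and $i\in\{2,\ldots,n-1\}$; and $((k-1)(n-1)+n,1)$ for $k\in\{1,\ldots,m\}$. For $k\in\{1,\ldots,m\}$, $V^k=\{1\}\cup\{(k-1)(n-1)+\ell:\ \ell=2,\ldots,n\}$. A walk is a sequence of vertices $\langle v_1,\ldots,v_r\rangle$ in which each $(v_t,v_{t+1})$ is an edge; its length is $r-1$. *)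

(* Defs.v *)
From mathcomp Require Import all_boot.
Set Implicit Arguments. Unset Strict Implicit. Unset Printing Implicit Defensive.

Definition dw_edge (m n : nat) (a b : nat) : bool :=
  has (fun k =>
         [|| (a == 1) && (b == (k - 1) * (n - 1) + 2),
             has (fun i => (a == (k - 1) * (n - 1) + i) && (b == (k - 1) * (n - 1) + i + 1))
                 (iota 2 (n - 2))
           | (a == (k - 1) * (n - 1) + n) && (b == 1)])
      (iota 1 m).

Definition dw_vertex (m n x : nat) : bool := (1 <= x) && (x <= m * (n - 1) + 1).

Definition dw_Vk (n k x : nat) : bool :=
  (x == 1) || ((k - 1) * (n - 1) + 2 <= x <= (k - 1) * (n - 1) + n).

Definition dw_walk (m n : nat) (w : seq nat) (i j len : nat) : Prop :=
  [/\ size w = len.+1, head 0 w = i, last 0 w = j,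
      all (dw_vertex m n) w & path (dw_edge m n) (head 0 w) (behead w)].

(* Main.v *)
Require Import Defs.
From mathcomp Require Import all_boot.
From mathcomp Require Import zify.

Lemma blade_inj a b N l l' : 2 <= l <= N + 1 -> 2 <= l' <= N + 1 ->
  a * N + l = b * N + l' -> a = b /\ l = l'.
Proof.
move=> hl hl'; case: (ltngtP a b) => h E.
- have : a.+1 * N <= b * N by rewrite leq_mul2r h orbT.
  rewrite mulSn; lia.
- have : b.+1 * N <= a * N by rewrite leq_mul2r h orbT.
  rewrite mulSn; lia.
- subst; lia.
Qed.

Section W.
Variables (m n : nat).
Hypothesis n3 : 3 <= n.

Lemma step_inv k l c : 2 <= l < n ->
  dw_edge m n ((k - 1) * (n - 1) + l) c -> c = (k - 1) * (n - 1) + l + 1.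
Proof.
move=> hl.
move/hasP => [k' hk' /or3P [/andP[/eqP e1 /eqP e2] | /hasP [i hi /andP[/eqP e1 /eqP e2]] | /andP[/eqP e1 /eqP e2]]].
- nia.
- by rewrite e2 e1.
- have [] := blade_inj (k-1) (k'-1) (n-1) l n ltac:(lia) ltac:(lia) e1; lia.
Qed.

Lemma end_inv k c : dw_edge m n ((k - 1) * (n - 1) + n) c -> c = 1.
Proof.
move/hasP => [k' hk' /or3P [/andP[/eqP e1 /eqP e2] | /hasP [i hi /andP[/eqP e1 /eqP e2]] | /andP[/eqP e1 /eqP e2]]].
- nia.
- rewrite mem_iota in hi. have [] := blade_inj (k-1) (k'-1) (n-1) n i ltac:(lia) ltac:(lia) e1; lia.
- by [].
Qed.

Lemma hub_inv c : dw_edge m n 1 c -> exists r, 1 <= r <= m /\ c = (r - 1) * (n - 1) + 2.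
Proof.
move/hasP => [k' hk' /or3P [/andP[/eqP e1 /eqP e2] | /hasP [i hi /andP[/eqP e1 /eqP e2]] | /andP[/eqP e1 /eqP e2]]].
- rewrite mem_iota in hk'. exists k'; split => //; lia.
- rewrite mem_iota in hi. nia.
- nia.
Qed.

Lemma step_edge k l : 1 <= k <= m -> 2 <= l < n ->
  dw_edge m n ((k - 1) * (n - 1) + l) ((k - 1) * (n - 1) + l + 1).
Proof.
move=> hk hl; apply/hasP; exists k; first by rewrite mem_iota; lia.
apply/or3P; apply: Or32; apply/hasP; exists l; first by rewrite mem_iota; lia.
by rewrite !eqxx.
Qed.

Lemma end_edge k : 1 <= k <= m -> dw_edge m n ((k - 1) * (n - 1) + n) 1.
Proof.
move=> hk; apply/hasP; exists k; first by rewrite mem_iota; lia.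
by apply/or3P; apply: Or33; rewrite !eqxx.
Qed.

Lemma hub_edge k : 1 <= k <= m -> dw_edge m n 1 ((k - 1) * (n - 1) + 2).
Proof.
move=> hk; apply/hasP; exists k; first by rewrite mem_iota; lia.
by apply/or3P; apply: Or31; rewrite !eqxx.
Qed.

Definition fw k l t := [seq (k - 1) * (n - 1) + x | x <- iota l.+1 t].

Lemma fwd k t : forall l p, 2 <= l -> l + t <= n -> size p = t ->
  path (dw_edge m n) ((k - 1) * (n - 1) + l) p -> p = fw k l t.
Proof.
elim: t => [|t IH] l [|c p] //= hl hlt [hs] /andP[he hp].
have hc := step_inv k l c ltac:(lia) he.
rewrite hc -addnA addn1 (IH l.+1 p) //. all: try lia. by have -> : (k-1)*(n-1) + l.+1 = c by rewrite hc addnS addn1.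
Qed.

Lemma fwd_path k t : forall l, 1 <= k <= m -> 2 <= l -> l + t <= n ->
  path (dw_edge m n) ((k - 1) * (n - 1) + l) (fw k l t).
Proof.
elim: t => [|t IH] l hk hl hlt //=.
have E : (k - 1) * (n - 1) + l.+1 = (k - 1) * (n - 1) + l + 1 by rewrite addnS addn1.
rewrite E step_edge //=; last lia.
rewrite -E; apply: IH => //; lia.
Qed.

Lemma fw_last k t : forall l, last ((k - 1) * (n - 1) + l) (fw k l t) = (k - 1) * (n - 1) + l + t.
Proof.
elim: t => [|t IH] l /=; first by rewrite addn0.
by rewrite IH; lia.
Qed.

Lemma fw_size k l t : size (fw k l t) = t.
Proof. by rewrite size_map size_iota. Qed.

Lemma vert k x : 1 <= k <= m -> 1 <= x <= n -> dw_vertex m n ((k - 1) * (n - 1) + x).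
Proof.
move=> hk hx; rewrite /dw_vertex.
have : (k - 1) * (n - 1) + (n - 1) <= m * (n - 1).
  rewrite -mulSnr; have -> : (k - 1).+1 = k by lia.
  by rewrite leq_mul2r; apply/orP; right; lia.
nia.
Qed.

Lemma fw_vertex k l t : 1 <= k <= m -> 1 <= l -> l + t <= n -> all (dw_vertex m n) (fw k l t).
Proof.
move=> hk hl hlt; apply/allP => x /mapP [y]; rewrite mem_iota => hy ->.
apply: vert => //; lia.
Qed.

Definition canon k r l :=
  ((k - 1) * (n - 1) + l) :: fw k l (n - l) ++ 1 :: fw r 1 (l - 2).

Lemma canon_walk k r l : 1 <= k <= m -> 1 <= r <= m -> 3 <= l <= n ->
  dw_walk m n (canon k r l) ((k - 1) * (n - 1) + l) ((r - 1) * (n - 1) + (l - 1)) (n - 1).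
Proof.
move=> hk hr hl.
have E : l - 2 = (l - 3).+1 by lia.
split.
- rewrite /= size_cat /= !fw_size; lia.
- by [].
- rewrite /= last_cat /= E /= fw_last; lia.
- rewrite /= all_cat /= vert ?fw_vertex //; try lia.
  rewrite /dw_vertex; apply/andP; split => //; nia.
- rewrite /= cat_path fwd_path //; try lia.
  rewrite fw_last /= E /=.
  have -> : (k - 1) * (n - 1) + l + (n - l) = (k - 1) * (n - 1) + n by lia.
  rewrite end_edge // hub_edge //=.
  apply: fwd_path => //; lia.
Qed.

Lemma walk_form k r i j w : 1 <= r ->
  dw_Vk n k i -> i != 1 -> dw_Vk n r j -> j != 1 ->
  dw_walk m n w i j (n - 1) ->
  exists l, [/\ 3 <= l <= n, i = (k - 1) * (n - 1) + l,
     j = (r - 1) * (n - 1) + (l - 1) & w = canon k r l].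
Proof.
move=> hr Vi i1 Vj j1 [].
case: w => [|x p] //= [hs] -> hlast hall hp.
have [l hl Ei] : exists2 l, 2 <= l <= n & i = (k - 1) * (n - 1) + l.
  move: Vi; rewrite /dw_Vk (negbTE i1) /= => /andP [h1 h2].
  exists (i - (k - 1) * (n - 1)); nia.
subst i.
have [p1 [p2 [Ep s1]]] : exists p1 p2, p = p1 ++ p2 /\ size p1 = n - l.
  exists (take (n - l) p), (drop (n - l) p); rewrite cat_take_drop size_take hs.
  split => //; case: ltnP => h; [lia| clear -h hl n3; lia].
subst p.
move: hs; rewrite size_cat s1 => hs.
rewrite cat_path in hp; case/andP: hp => hp1 hp2.
have E1 := fwd k (n - l) l p1 ltac:(lia) ltac:(lia) s1 hp1.
subst p1.
rewrite fw_last in hp2.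
have E2 : (k - 1) * (n - 1) + l + (n - l) = (k - 1) * (n - 1) + n by lia.
rewrite E2 in hp2.
case: p2 hs hp2 hlast hall => [|c p3] hs hp2 hlast hall.
  by move: hs => /= hs; clear -hs hl n3; lia.
move: hp2 => /= /andP [he hp3].
have ec := end_inv k c he; subst c.
case: p3 hs hp3 hlast hall => [|d p4] hs hp3 hlast hall.
  by move: hlast; rewrite last_cat /= => ej; rewrite -ej in j1.
move: hp3 => /= /andP [hd hp4].
have [r' [hr' ed]] := hub_inv d hd; subst d.
have E4 := fwd r' (l - 3) 2 p4 ltac:(lia) ltac:(lia) ltac:(simpl in hs; lia) hp4.
subst p4.
move: hlast; rewrite last_cat /= fw_last => ej.
have [l2 hl2 Ej] : exists2 l2, 2 <= l2 <= n & j = (r - 1) * (n - 1) + l2.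
  move: Vj; rewrite /dw_Vk (negbTE j1) /= => /andP [h1 h2].
  exists (j - (r - 1) * (n - 1)); nia.
rewrite Ej in ej.
have [er el] := blade_inj (r' - 1) (r - 1) (n - 1) (2 + (l - 3)) l2 ltac:(lia) ltac:(lia) ltac:(rewrite -ej; lia).
have rr : r' = r by lia.
subst r'.
simpl in hs.
exists l; split => //; try lia.
rewrite /canon.
have -> : l - 2 = (l - 3).+1 by lia.
by [].
Qed.

End W.

Theorem lemma2p2 (m n k r i j : nat) :
  1 <= m -> 3 <= n -> 1 <= k <= m -> 1 <= r <= m -> k != r ->
  dw_Vk n k i -> i != 1 -> dw_Vk n r j -> j != 1 ->
  ((exists w, dw_walk m n w i j (n - 1)) <->
   (exists l, [/\ 3 <= l <= n, i = (k - 1) * (n - 1) + l & j = (r - 1) * (n - 1) + (l - 1)]))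
  /\ (forall w1 w2, dw_walk m n w1 i j (n - 1) -> dw_walk m n w2 i j (n - 1) -> w1 = w2).
Proof.
move=> hm hn hk hr hkr Vi i1 Vj j1.
have hr1 : 1 <= r by case/andP: hr.
split; first split.
- case=> w hw.
  have [l [hl Ei Ej _]] := @walk_form m n hn _ _ _ _ _ hr1 Vi i1 Vj j1 hw.
  by exists l; split.
- case=> l [hl -> ->].
  exists (canon n k r l); exact: canon_walk.
- move=> w1 w2 h1 h2.
  have [l1 [hl1 Ei1 _ ->]] := @walk_form m n hn _ _ _ _ _ hr1 Vi i1 Vj j1 h1.
  have [l2 [hl2 Ei2 _ ->]] := @walk_form m n hn _ _ _ _ _ hr1 Vi i1 Vj j1 h2.
  have -> : l1 = l2 by rewrite Ei1 in Ei2; apply/eqP; rewrite -(eqn_add2l ((k - 1) * (n - 1))) Ei2.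
  by [].
Qed.
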